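(* Let $s,d$ be integers with $1\le s$ and $d\ge 2s$. There is a constant $C$ depending only on $d$ such that the following holds for all $n\ge 2(d+1)$ and all real $K\ge 0$: if $\mathcal F\subseteq\binom{[n]}{d+1}$ is an $s$-witness family with $|\mathcal F|\ge\binom{n-1}{d}-Kn^{d-1}$, then there exists $x_0\in[n]$ such that the star $\mathcal F^*=\{F^*\in\binom{[n]}{d+1}: x_0\in F^*\}$ satisfies $|\mathcal F\triangle\mathcal F^*|\le C(K+1)n^{d-1}$.
   Context: $[n]=\{1,\dots,n\}$ and $\binom{[n]}{d+1}$ denotes the family of all $(d+1)$-element subsets of $[n]$; $\triangle$ denotes symmetric difference. For $n\ge d+1$ and $0\le s\le d$, a family $\mathcal F\subseteq\binom{[n]}{d+1}$ is an $s$-witness family if for every $F\in\mathcal F$ there exists $B_F\subseteq F$ with $|B_F|=s$ such that $F\cap F'\neq B_F$ for every $F'\in\mathcal F$. *)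

(* Defs.v *)
From mathcomp Require Import all_boot all_order all_algebra.
From mathcomp Require Export reals.
Set Implicit Arguments. Unset Strict Implicit. Unset Printing Implicit Defensive.

(* A family of (d+1)-subsets of [n] is modelled as F : {set {set 'I_n}}
   together with the hypothesis that every member has cardinality d+1. *)
Definition uniform_family (n k : nat) (F : {set {set 'I_n}}) : Prop :=
  forall A, A \in F -> #|A| = k.

Definition s_witness (n s : nat) (F : {set {set 'I_n}}) : Prop :=
  forall A, A \in F -> exists B : {set 'I_n},
    [/\ B \subset A, #|B| = s & forall A', A' \in F -> A :&: A' != B].

Definition star (n k : nat) (x0 : 'I_n) : {set {set 'I_n}} :=
  [set A : {set 'I_n} | (#|A| == k) && (x0 \in A)].

Definition symdiff (T : finType) (A B : {set T}) : {set T} :=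
  (A :\: B) :|: (B :\: A).

(* Main.v *)
Require Import Defs.
From mathcomp Require Import all_boot all_order all_algebra.
From mathcomp Require Import reals.
From mathcomp Require Import zify ring lra.
Set Implicit Arguments. Unset Strict Implicit. Unset Printing Implicit Defensive.

Lemma card_bigcup_le (I T : finType) (P : pred I) (S : I -> {set T}) :
  #|\bigcup_(i | P i) S i| <= \sum_(i | P i) #|S i|.
Proof.
elim/big_rec2: _ => [|i u A _ IH]; first by rewrite cards0.
by rewrite (leq_trans (leq_card_setU _ _)) // leq_add2l.
Qed.

Lemma exp_mono a b m : a <= b -> a ^ m <= b ^ m.
Proof. by move=> h; elim: m => // m IH; rewrite !expnS leq_mul. Qed.

Lemma ffact_le_exp n m : n ^_ m <= n ^ m.
Proof.
elim: m n => [|m IH] n; first by [].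
rewrite ffactnS expnS leq_mul2l; apply/orP; right.
by apply: leq_trans (IH _) _; apply: exp_mono; case: n.
Qed.

Lemma bin_le_exp n m : 'C(n, m) <= n ^ m.
Proof.
apply: leq_trans (ffact_le_exp n m); rewrite -bin_ffact.
by rewrite leq_pmulr // fact_gt0.
Qed.

Lemma ffact_ge n m : (n - m) ^ m <= n ^_ m.
Proof.
elim: m => [|m IH]; first by [].
rewrite ffactnSr expnSr leq_mul //; last lia.
apply: leq_trans IH; apply: exp_mono; lia.
Qed.

Lemma bin_lower n N j : n <= 2 * (N - j) -> n ^ j <= j`! * 2 ^ j * 'C(N, j).
Proof.
move=> h; rewrite mulnC mulnA bin_ffact.
apply: (@leq_trans ((2 * (N - j)) ^ j)); first exact: exp_mono.
rewrite expnMn mulnC leq_mul2r ffact_ge orbT //.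
Qed.

Lemma sum_ind_card (T : finType) (A : {pred T}) (P : pred T) :
  \sum_(i in A) (P i : nat) = #|[set i in A | P i]|.
Proof.
rewrite -sum1_card [RHS]big_mkcond [LHS]big_mkcond /=.
by apply: eq_bigr=> i _; rewrite inE; case: (i \in A); case: (P i).
Qed.

Lemma count_sup n k (Fam : {set {set 'I_n}}) (P : {set 'I_n}) :
  (forall A, A \in Fam -> #|A| = k) ->
  #|[set A in Fam | P \subset A]| <= n ^ (k - #|P|).
Proof.
move=> hF.
set X := [set A in Fam | P \subset A].
have inj : {in X &, injective (fun A => A :\: P)}.
  move=> A1 A2; rewrite !inE => /andP[_ h1] /andP[_ h2] e.
  by rewrite -(setID A1 P) -(setID A2 P) e (setIidPr h1) (setIidPr h2).
rewrite -(card_in_imset inj).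
apply: leq_trans (bin_le_exp n _).
have -> : 'C(n, k - #|P|) = #|[set C : {set 'I_n} | #|C| == k - #|P|]|.
  by rewrite card_draws card_ord.
apply: subset_leq_card.
apply/subsetP=> C /imsetP[A AX ->]; move: AX; rewrite /X inE => /andP[AF PA].
by rewrite inE cardsD (setIidPr PA) hF.
Qed.

Lemma bin_shift m j a : 'C(m, j) <= 'C(m + a, j + a).
Proof.
elim: a => [|a IH]; first by rewrite !addn0.
by rewrite !addnS binS (leq_trans IH) // leq_addl.
Qed.

Lemma ineq_big (D2 m k P E : nat) :
  D2 * m + P * ((k+1+3 * D2) * m) + 2 * E * m <= (2 * D2 + P * (1+3 * D2) + 2 * E) * (k+1) * m.
Proof. nia. Qed.
Lemma ineq_cancel (L F a b : nat) : 0 < L -> 2 * L * F <= L * (F + a) + 2 * L * b -> F <= a + 2 * b.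
Proof. nia. Qed.
Lemma ineq_small (D2 m k X : nat) : 0 < D2 -> k * m + 2 * (D2 * m) <= (2 * D2 + X) * (k+1) * m.
Proof. nia. Qed.

Lemma final_arith (k LL m D2 N Dl SG Lbd p_ds p_d2s p_s p_s1 p_d F Fx Ncn Cn1 Q4 : nat) :
  0 < LL -> 0 < D2 ->
  SG * Lbd <= Q4 * ((k + 1 + 3 * D2) * m) ->
  p_d2s <= LL * Lbd ->
  N * Dl <= SG + 2 * (N * p_s1) ->
  Fx <= D2 * m + Dl * p_ds ->
  Ncn <= N * p_ds ->
  F <= Ncn + D2 * m ->
  N <= p_s ->
  p_d2s * p_s = p_ds ->
  p_s * p_s1 * p_d2s = m ->
  p_s * p_ds = p_d ->
  p_d <= LL * Cn1 ->
  Cn1 <= F + k * m ->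
  Fx <= F ->
  Fx <= (2 * D2 + 2 * LL * LL * Q4 * (1 + 3 * D2) + 2 * (2 * LL)) * (k + 1) * m.
Proof.
move=> LLp D2p hSG hL1 hgp hx0 hnu hFu hN e1 e2 e3 hL2 Hs hFx.
set EE0 := 2 * LL.
case: (boolP (p_s <= EE0 * N)) => hbig.
  have h1 : p_ds * Dl <= EE0 * (LL * (Q4 * ((k + 1 + 3 * D2) * m))) + 2 * EE0 * m.
    rewrite -e1 -mulnA.
    apply: (@leq_trans (p_d2s * (EE0 * (N * Dl)))).
      by rewrite leq_mul2l; apply/orP; right; rewrite mulnA leq_mul2r hbig orbT.
    rewrite mulnCA; apply: (@leq_trans (EE0 * (p_d2s * (SG + 2 * (N * p_s1))))).
      by rewrite leq_mul2l; apply/orP; right; rewrite leq_mul2l hgp orbT.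
    rewrite mulnDr mulnDr; apply: leq_add.
      rewrite leq_mul2l; apply/orP; right; rewrite mulnC.
      apply: (@leq_trans (SG * (LL * Lbd))); first by rewrite leq_mul2l hL1 orbT.
      by rewrite mulnCA leq_mul2l hSG orbT.
    have hb : p_d2s * (N * p_s1) <= m.
      by rewrite -e2 mulnC leq_mul2r leq_mul2r hN !orbT.
    nia.
  apply: (leq_trans hx0); rewrite [Dl * _]mulnC.
  apply: leq_trans (leq_add (leqnn _) h1) _.
  have := ineq_big D2 m k (EE0 * LL * Q4) EE0.
  by rewrite /EE0 !mulnA addnA.
have hsmall : EE0 * N < p_s by rewrite ltnNge.
have h2 : EE0 * F <= LL * (F + k * m) + EE0 * (D2 * m).
  apply: (@leq_trans (EE0 * (N * p_ds) + EE0 * (D2 * m))).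
    by rewrite -mulnDr leq_mul2l; apply/orP; right; rewrite (leq_trans hFu) // leq_add2r.
  rewrite leq_add2r; apply: (@leq_trans p_d).
    by rewrite -e3 mulnA leq_mul2r (ltnW hsmall) orbT.
  by apply: (leq_trans hL2); rewrite leq_mul2l Hs orbT.
have h3 : F <= k * m + 2 * (D2 * m).
  move: h2; rewrite /EE0 => h2; nia.
apply: (leq_trans hFx); apply: (leq_trans h3); rewrite -addnA; exact: ineq_small.
Qed.


Lemma exp_mono_r n a b : a = b -> n ^ a <= n ^ b. Proof. by move=> ->. Qed.

Lemma exp_mono_r_bin n a b : a = b -> 'C(n, a) <= 'C(n, b). Proof. by move=> ->. Qed.

Lemma bin_pascal_le n d : 0 < n -> 0 < d -> 'C(n, d) <= 'C(n.-1, d) + n ^ d.-1.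
Proof.
case: n => [//|n'] _; case: d => [//|d'] _ /=.
rewrite binS leq_add2l; apply: leq_trans (bin_le_exp _ _) _.
by apply: exp_mono; apply: leqnSn.
Qed.

Lemma lin_W (U img Cnd nice B F Cn1 km m X : nat) : U = Cnd - img -> img <= Cnd ->
  nice <= img + B -> F <= nice + X -> Cn1 <= F + km -> Cnd <= Cn1 + m -> B <= X ->
  U + B <= km + m + 3 * X.
Proof. lia. Qed.

Lemma aux2 a b c m : b * c <= m -> a * (b * (2 * c)) <= 2 * a * m.
Proof. nia. Qed.

Section S.
Variables (n d s : nat) (F : {set {set 'I_n}}) (x_def : 'I_n).
Hypothesis s1 : 0 < s.
Hypothesis sd : 2 * s <= d.
Hypothesis Funif : forall A, A \in F -> #|A| = d.+1.

Definition wit (B A : {set 'I_n}) := (B \subset A) && [forall A' in F, A :&: A' != B].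
Definition WB (B : {set 'I_n}) := [set A in F | wit B A].
Definition EE (B : {set 'I_n}) (x : 'I_n) := [set A in F | (B \subset A) && (x \notin A)].
Definition Q := (d.+1)^2 * n^(d - s.+1).
Definition center (B : {set 'I_n}) (x : 'I_n) :=
  [&& x \notin B, [forall A in WB B, x \in A] & #|EE B x| <= Q].
Definition Ss := [set B : {set 'I_n} | #|B| == s].
Definition G := [set B in Ss | [exists x, center B x]].
Definition c (B : {set 'I_n}) := odflt x_def [pick x | center B x].

Lemma cross (B A A' : {set 'I_n}) : A \in F -> wit B A -> A' \in F -> B \subset A' ->
  exists y, [/\ y \in A', y \in A & y \notin B].
Proof.
move=> AF /andP[BA /forall_inP h] A'F BA'.
case: (pickP [pred y | [&& y \in A', y \in A & y \notin B]]) => [y /and3P[]|none].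
  by move=> *; exists y.
exfalso; have /eqP := h _ A'F; apply; apply/setP=> z.
rewrite inE; have := none z; rewrite /=.
case zA: (z \in A); case zA': (z \in A'); case zB: (z \in B) => //= _.
- by have := subsetP BA' z zB; rewrite zA'.
- by have := subsetP BA z zB; rewrite zA.
- by have := subsetP BA z zB; rewrite zA.
Qed.

Lemma unionb (B Y : {set 'I_n}) (a : 'I_n -> {set 'I_n}) : #|B| = s -> [disjoint Y & B] ->
  (forall y, y \in Y -> a y \in WB B /\ y \notin a y) ->
  #|[set A' in F | (B \subset A') && [exists y in Y, y \in A']]|
    <= #|Y| * (d.+1 * n^(d - s.+1)).
Proof.
move=> cB dYB ha.
pose U := \bigcup_(y in Y) \bigcup_(z in a y :\: B)
            [set A in F | (z |: (y |: B)) \subset A].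
apply: (@leq_trans #|U|).
  apply: subset_leq_card; apply/subsetP=> A'; rewrite inE.
  case/andP=> A'F /andP[BA' /exists_inP[y yY yA']].
  have [ayW yay] := ha y yY.
  move: ayW; rewrite inE => /andP[ayF wy].
  have [z [zA' zay zB]] := cross ayF wy A'F BA'.
  apply/bigcupP; exists y => //; apply/bigcupP; exists z; first by rewrite inE zB.
  rewrite inE A'F /=; apply/subsetP=> w; rewrite !inE.
  case/orP=> [/eqP->//|/orP[/eqP->//|]]; exact: (subsetP BA').
apply: (leq_trans (card_bigcup_le _ _)).
rewrite -sum_nat_const; apply: leq_sum=> y yY.
apply: (leq_trans (card_bigcup_le _ _)).
apply: (@leq_trans (\sum_(z in a y :\: B) n ^ (d - s.+1))).
  apply: leq_sum => z; rewrite inE => /andP[zB zay].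
  apply: leq_trans (@count_sup n d.+1 F (z |: (y |: B)) Funif) _.
  have yB : y \notin B by rewrite (disjointFr dYB).
  have [_ yay] := ha y yY.
  have zy : z != y by apply/eqP => e; move: yay; rewrite -{1}e zay.
  rewrite !cardsU1 !inE (negbTE zy) (negbTE zB) yB cB /=.
  by apply: exp_mono_r; lia.
rewrite sum_nat_const leq_mul2r; apply/orP; right.
have [ayW _] := ha y yY; move: ayW; rewrite inE => /andP[ayF _].
by rewrite -(Funif ayF) subset_leq_card // subsetDl.
Qed.


Lemma unionQ (B Y A1 : {set 'I_n}) : #|B| = s -> A1 \in F -> Y \subset A1 :\: B ->
  [forall y in Y, exists A in WB B, y \notin A] ->
  #|[set A' in F | (B \subset A') && [exists y in Y, y \in A']]| <= Q.
Proof.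
move=> cB A1F YT /forall_inP h1.
pose a y := odflt set0 [pick A in WB B | y \notin A].
have ha : forall y, y \in Y -> a y \in WB B /\ y \notin a y.
  move=> y yT; rewrite /a; case: pickP => [A /andP[]|none] /=; first by split.
  have /exists_inP[A AW yA] := h1 y yT; by have := none A; rewrite AW yA.
have disY : [disjoint Y & B].
  rewrite disjoints_subset; apply: (subset_trans YT).
  by rewrite setDE subsetIr.
apply: (leq_trans (unionb cB disY ha)).
rewrite /Q expnS -mulnA leq_mul2r; apply/orP; right.
apply: (leq_trans (subset_leq_card YT)).
by rewrite -(Funif A1F) subset_leq_card // subsetDl.
Qed.


Lemma noncenter_small (B : {set 'I_n}) : #|B| = s -> ~~ [exists x, center B x] ->
  #|WB B| <= Q.
Proof.
move=> cB nc; rewrite leqNgt; apply/negP => big.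
have : 0 < #|WB B| by apply: leq_ltn_trans big.
case/card_gt0P => A1; rewrite /WB inE => /andP[A1F wA1].
have subT : forall (Y : {set 'I_n}) (A : {set 'I_n}), A \in F -> B \subset A ->
   (forall y, y \in A -> y \in A1 -> y \notin B -> y \in Y) ->
   A \in [set A' in F | (B \subset A') && [exists y in Y, y \in A']].
  move=> Y A AF BA hY; rewrite inE AF BA /=.
  have [y [yA yA1 yB]] := cross A1F wA1 AF BA.
  by apply/exists_inP; exists y => //; apply: hY.
case: (boolP [forall y in A1 :\: B, exists A in WB B, y \notin A]) => [h1 | ].
  have h := unionQ cB A1F (subxx _) h1.
  suff : #|WB B| <= Q by rewrite leqNgt big.
  apply: leq_trans h; apply: subset_leq_card; apply/subsetP=> A; rewrite /WB inE => /andP[AF wA].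
  apply: subT => //; first by case/andP: wA.
  by move=> y _ yA1 yB; rewrite inE yB yA1.
case/forall_inPn => x xT /exists_inPn hx.
have xB : x \notin B by move: xT; rewrite inE => /andP[].
have bigE : Q < #|EE B x|.
  have := (elimT existsPn nc) x.
  rewrite /center xB /= ltnNge; case: (boolP [forall A in WB B, x \in A]) => //.
  by move/forall_inPn => [A AW]; rewrite (negbTE (hx A AW)).
case: (boolP [forall y in (A1 :\: B) :\ x, exists A in WB B, y \notin A]) => [h1 | ].
  have h := unionQ cB A1F (subsetDl _ _) h1.
  suff : #|EE B x| <= Q by rewrite leqNgt bigE.
  apply: leq_trans h; apply: subset_leq_card; apply/subsetP=> A; rewrite /EE inE => /andP[AF /andP[BA xA]].
  apply: subT => // y yA yA1 yB; rewrite !inE yB yA1 /=.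
  have : y != x by apply/negP => /eqP e; move: xA; rewrite -e yA.
  by move=> ->.
case/forall_inPn => y yT /exists_inPn hy.
move: yT; rewrite !inE => /andP[yx /andP[yB yA1]].
have : #|WB B| <= n ^ (d.+1 - #|y |: (x |: B)|).
  apply: leq_trans (@count_sup n d.+1 F (y |: (x |: B)) Funif).
  apply: subset_leq_card; apply/subsetP=> A AW; rewrite inE.
  move: (AW); rewrite /WB inE => /andP[AF /andP[BA _]]; rewrite AF /=.
  have xA : x \in A by have := hx A AW; rewrite negbK.
  have yA : y \in A by have := hy A AW; rewrite negbK.
  apply/subsetP=> z; rewrite !inE; case/orP=> [/eqP->//|/orP[/eqP->//|]].
  exact: (subsetP BA).
rewrite !cardsU1 !inE (negbTE yx) (negbTE yB) (negbTE xB) cB /=.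
move=> h; suff : #|WB B| <= Q by rewrite leqNgt big.
apply: (leq_trans h); rewrite /Q; apply: leq_trans (leq_pmull _ _); last first.
  by rewrite expn_gt0.
by apply: exp_mono_r; lia.
Qed.


Hypothesis Fwit : forall A, A \in F -> exists B : {set 'I_n},
    [/\ B \subset A, #|B| = s & forall A', A' \in F -> A :&: A' != B].

Definition nice := [set A in F | [exists B in G, wit B A]].
Definition bA (A : {set 'I_n}) := odflt set0 [pick B in G | wit B A].
Definition xA (A : {set 'I_n}) := c (bA A).
Definition phi (A : {set 'I_n}) := A :\ xA A.
Definition image := phi @: nice.
Definition rep (D : {set 'I_n}) := odflt set0 [pick A in nice | phi A == D].
Definition Ds := [set D : {set 'I_n} | #|D| == d].
Definition U := Ds :\: image.
Definition Bad := \sum_(B in G) #|EE B (c B)|.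

Lemma c_center B : B \in G -> center B (c B).
Proof.
rewrite inE => /andP[_ /existsP[x hx]]; rewrite /c.
by case: pickP => [y //|/(_ x)]; rewrite hx.
Qed.

Lemma center_in B x A : center B x -> A \in F -> wit B A -> x \in A.
Proof.
by case/and3P => _ /forall_inP h _ AF wA; apply: h; rewrite inE AF.
Qed.

Lemma nice_props A : A \in nice ->
  [/\ A \in F, bA A \in G, wit (bA A) A, xA A \in A & xA A \notin bA A].
Proof.
rewrite inE => /andP[AF /exists_inP[B BG wB]].
have [hG hw] : bA A \in G /\ wit (bA A) A.
  rewrite /bA; case: pickP => [B' /andP[]//|/(_ B)]; by rewrite BG wB.
have hc := c_center hG.
split => //; first exact: center_in hc AF hw.
by case/and3P: hc.
Qed.

Lemma phiK A : A \in nice -> xA A |: phi A = A.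
Proof. by case/nice_props => _ _ _ xAA _; rewrite /phi setD1K. Qed.

Lemma bA_phi A : A \in nice -> bA A \subset phi A.
Proof.
case/nice_props => _ _ /andP[BA _] _ xB; apply/subsetP=> z zB.
rewrite !inE (subsetP BA _ zB) andbT; apply/negP => /eqP e.
by move: xB; rewrite -e zB.
Qed.

Lemma phi_card A : A \in nice -> #|phi A| = d.
Proof.
case/nice_props => AF _ _ xAA _; move: (Funif AF).
by rewrite (cardsD1 (xA A)) xAA add1n => [[]].
Qed.

Lemma sizeSs : #|Ss| <= n ^ s.
Proof. by rewrite /Ss card_draws card_ord bin_le_exp. Qed.

Lemma nQ : n ^ s * Q = (d.+1)^2 * n ^ d.-1.
Proof.
rewrite /Q mulnCA -expnD; congr (_ * n ^ _); lia.
Qed.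

Lemma nonnice_bound : #|[set A in F | A \notin nice]| <= n ^ s * Q.
Proof.
apply: (@leq_trans #|\bigcup_(B in Ss :\: G) WB B|).
  apply: subset_leq_card; apply/subsetP=> A; rewrite inE => /andP[AF nA].
  have [B [BA cB hB]] := Fwit AF.
  have wB : wit B A by rewrite /wit BA; apply/forall_inP.
  apply/bigcupP; exists B; last by rewrite inE AF.
  have BSs : B \in Ss by rewrite inE cB.
  rewrite in_setD BSs andbT.
  apply: contraNN nA => BG; rewrite inE AF; apply/exists_inP; by exists B.
apply: (leq_trans (card_bigcup_le _ _)).
apply: (@leq_trans (\sum_(B in Ss :\: G) Q)).
  apply: leq_sum => B; rewrite in_setD => /andP[nG BSs].
  have cB : #|B| = s by move: BSs; rewrite inE => /eqP.
  apply: noncenter_small => //; apply: contraNN nG => h.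
  by rewrite inE BSs h.
rewrite sum_nat_const leq_mul2r; apply/orP; right.
exact: leq_trans (subset_leq_card (subsetDl _ _)) sizeSs.
Qed.

Lemma Bad_bound : Bad <= n ^ s * Q.
Proof.
rewrite /Bad; apply: (@leq_trans (\sum_(B in G) Q)).
  by apply: leq_sum => B BG; case/and3P: (c_center BG).
rewrite sum_nat_const leq_mul2r; apply/orP; right.
apply: leq_trans sizeSs; apply: subset_leq_card; apply/subsetP=> B.
by rewrite inE => /andP[].
Qed.


Lemma rep_props D : D \in image -> rep D \in nice /\ phi (rep D) = D.
Proof.
case/imsetP => A An ->; rewrite /rep; case: pickP => [A' /andP[h /eqP e]|/(_ A)] //=.
by rewrite An eqxx.
Qed.

Lemma phi_sub A : phi A \subset A.
Proof. exact: subsetDl. Qed.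

Lemma nice_le : #|nice| <= #|image| + Bad.
Proof.
apply: (@leq_trans #|(rep @: image) :|: \bigcup_(B in G) EE B (c B)|).
  apply: subset_leq_card; apply/subsetP=> A An.
  have Dimg : phi A \in image by apply: imset_f.
  have [A1n eA1] := rep_props Dimg.
  case: (eqVneq (rep (phi A)) A) => [eq | ne].
    by rewrite in_setU; apply/orP; left; apply/imsetP; exists (phi A); rewrite // eq.
  rewrite in_setU; apply/orP; right.
  have [A1F bG wA1 xA1 xB1] := nice_props A1n.
  have [AF _ _ xAA _] := nice_props An.
  apply/bigcupP; exists (bA (rep (phi A))) => //.
  rewrite inE AF /=; apply/andP; split.
    by apply: (subset_trans (bA_phi A1n)); rewrite eA1; exact: phi_sub.
  apply/negP => h; move: ne; rewrite -[X in X != A]phiK // -{3}(phiK An) eA1.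
  have : xA (rep (phi A)) \notin phi (rep (phi A)) by rewrite /phi setD11.
  rewrite eA1 /phi in_setD1 h andbT negbK => /eqP ->.
  by rewrite eqxx.
apply: (leq_trans (leq_card_setU _ _).1).
by apply: leq_add; [exact: leq_imset_card | exact: card_bigcup_le].
Qed.

Lemma image_Ds : image \subset Ds.
Proof.
by apply/subsetP=> D /imsetP[A An ->]; rewrite inE phi_card.
Qed.

Lemma card_U : #|U| = 'C(n, d) - #|image|.
Proof.
by rewrite /U cardsD (setIidPr image_Ds) /Ds card_draws card_ord.
Qed.

Definition ok (B B' D : {set 'I_n}) :=
  [&& c B != c B', B :|: B' \subset D, c B \notin D & c B' \notin D].
Definition conf (D : {set 'I_n}) := [exists B in G, exists B' in G, ok B B' D].

Lemma conf_helper B D : B \in G -> D \in image -> B \subset D -> c B \notin D ->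
   c B != xA (rep D) -> D \in \bigcup_(B0 in G) (phi @: EE B0 (c B0)).
Proof.
move=> BG Dimg BD cD cx; have [An eA] := rep_props Dimg.
have [AF _ _ _ _] := nice_props An.
apply/bigcupP; exists B => //; apply/imsetP; exists (rep D) => //.
rewrite inE AF /=; apply/andP; split.
  by apply: (subset_trans BD); rewrite -{1}eA; exact: phi_sub.
by rewrite -(phiK An) eA in_setU1 negb_or cx.
Qed.

Lemma conf_bound : #|[set D in Ds | conf D]| <= #|U| + Bad.
Proof.
apply: (@leq_trans #|U :|: \bigcup_(B in G) (phi @: EE B (c B))|).
  apply: subset_leq_card; apply/subsetP=> D; rewrite inE => /andP[DDs].
  case/exists_inP=> B BG /exists_inP[B' B'G /and4P[cc SD cBD cB'D]].
  rewrite in_setU; case: (boolP (D \in image)) => Dimg; last first.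
    by rewrite /U in_setD Dimg DDs.
  apply/orP; right.
  have BD : B \subset D by apply: subset_trans SD; apply: subsetUl.
  have B'D : B' \subset D by apply: subset_trans SD; apply: subsetUr.
  case: (eqVneq (c B) (xA (rep D))) => e.
    apply: (conf_helper B'G Dimg B'D cB'D); rewrite -e eq_sym //.
  exact: (conf_helper BG Dimg BD cBD).
apply: (leq_trans (leq_card_setU _ _).1); rewrite leq_add2l.
apply: (leq_trans (card_bigcup_le _ _)); apply: leq_sum => B _.
exact: leq_imset_card.
Qed.


Definition T := \sum_(D in Ds) \sum_(B in G) \sum_(B' in G) (ok B B' D : nat).

Lemma sub_pow_card (D : {set 'I_n}) : #|D| = d ->
  \sum_(B in G) (B \subset D : nat) <= 2 ^ d.
Proof.
move=> cD; rewrite sum_ind_card -cD -card_powerset; apply: subset_leq_card.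
by apply/subsetP=> B; rewrite !inE => /andP[_ ->].
Qed.

Lemma T_upper : T <= 4 ^ d * #|[set D in Ds | conf D]|.
Proof.
rewrite -sum_ind_card big_distrr /=; apply: leq_sum => D; rewrite inE => /eqP cD.
case: (boolP (conf D)) => hc; last first.
  rewrite muln0 big1 // => B BG; rewrite big1 // => B' B'G.
  case h : (ok B B' D) => //; case/negP: hc.
  by apply/exists_inP; exists B => //; apply/exists_inP; exists B'.
rewrite muln1 (_ : 4 = 2 * 2) // expnMn.
apply: (@leq_trans (\sum_(B in G) (B \subset D : nat) * 2 ^ d)).
  apply: leq_sum => B BG.
  case: (boolP (B \subset D)) => BD; last first.
    rewrite mul0n big1 // => B' _; case h : (ok B B' D) => //.
    case/and4P: h => _ /(subset_trans (subsetUl B B')); by rewrite (negbTE BD).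
  rewrite mul1n; apply: leq_trans (sub_pow_card cD); apply: leq_sum => B' _.
  case h : (ok B B' D) => //; case/and4P: h => _ h _ _.
  by rewrite (subset_trans (subsetUr B B') h).
by rewrite -big_distrl /= leq_mul2r sub_pow_card ?orbT.
Qed.

Definition good (B B' : {set 'I_n}) :=
  [&& c B != c B', c B \notin B' & c B' \notin B].

Definition Lbd := 'C(n - (2 * s + 2), d - 2 * s).

Hypothesis n_large : 2 * d + 4 <= n.

Lemma good_many (B B' : {set 'I_n}) : B \in G -> B' \in G -> good B B' ->
  Lbd <= \sum_(D in Ds) (ok B B' D : nat).
Proof.
move=> BG B'G /and3P[cc cB' cB].
have cBB : c B \notin B by case/and3P: (c_center BG).
have cB'B' : c B' \notin B' by case/and3P: (c_center B'G).
have cBs : #|B| = s by move: BG; rewrite !inE => /andP[/eqP].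
have cB's : #|B'| = s by move: B'G; rewrite !inE => /andP[/eqP].
rewrite sum_ind_card.
pose S : {set 'I_n} := B :|: B'; pose P : {set 'I_n} := c B |: (c B' |: S).
have cS : #|S| <= 2 * s by rewrite /S cardsU cBs cB's; lia.
have cP : #|P| <= #|S| + 2.
  rewrite /P !cardsU1.
  case: (c B \notin c B' |: S); case: (c B' \notin S) => /=; rewrite ?add0n ?add1n addn2 //.
  by rewrite -addn2 leq_addr.
have cCP : #|~: P| = n - #|P| by have := cardsC P; rewrite card_ord; lia.
pose f (Y : {set 'I_n}) := Y :|: S.
pose Dr := [set Y : {set 'I_n} | Y \subset ~: P & #|Y| == d - #|S|].
have finj : {in Dr &, injective f}.
  have key : forall Y, Y \in Dr -> Y = f Y :\: S.
    move=> Y; rewrite inE => /andP[YP _]; rewrite /f setDUl setDv setU0.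
    apply/esym/setDidPl; rewrite disjoints_subset; apply: (subset_trans YP).
    rewrite setCS /P; apply/subsetP=> z zS; by rewrite !in_setU1 zS !orbT.
  by move=> Y1 Y2 h1 h2 e; rewrite (key _ h1) (key _ h2) e.
apply: (@leq_trans #|f @: Dr|); last first.
  apply: subset_leq_card; apply/subsetP=> D /imsetP[Y]; rewrite inE => /andP[YP /eqP cY] ->.
  have dYS : [disjoint Y & S].
    rewrite disjoints_subset; apply: (subset_trans YP).
    rewrite setCS /P; apply/subsetP=> z zS; by rewrite !in_setU1 zS !orbT.
  have nYc : forall z, z \in P -> z \notin Y.
    by move=> z zP; apply/negP => /(subsetP YP); rewrite inE zP.
  rewrite !inE /f cardsU (disjoint_setI0 dYS) cards0 subn0 cY subnK; last by lia.
  rewrite eqxx /= /ok cc subsetUr /= !in_setU !negb_or.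
  rewrite nYc ?(inE, eqxx) //= cBB cB' nYc ?(inE, eqxx, orbT) //=.
  by rewrite cB cB'B'.
rewrite (card_in_imset finj) /Dr cards_draws cCP /Lbd.
apply: (leq_trans (bin_shift _ _ (2 * s - #|S|))).
apply: (@leq_trans 'C(n - #|P|, d - 2 * s + (2 * s - #|S|))).
  by apply: leq_bin2l; lia.
apply: exp_mono_r_bin; lia.
Qed.


Definition g (x : 'I_n) := \sum_(B in G) (c B == x : nat).
Definition x0 := [arg max_(x > x_def) g x].

Lemma g_max x : g x <= g x0.
Proof. by rewrite /x0; case: arg_maxnP => // y _ h; apply: h. Qed.

Lemma T_lower : (\sum_(B in G) \sum_(B' in G) (good B B' : nat)) * Lbd <= T.
Proof.
rewrite /T [X in _ <= X]exchange_big big_distrl /=; apply: leq_sum => B BG.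
rewrite [X in _ <= X]exchange_big big_distrl /=; apply: leq_sum => B' B'G.
case: (boolP (good B B')) => h; last by rewrite mul0n.
by rewrite mul1n; apply: good_many.
Qed.

Lemma cnt_in x : \sum_(B' in G) (x \in B' : nat) <= n ^ (s - 1).
Proof.
rewrite sum_ind_card.
have hS : forall B, B \in Ss -> #|B| = s by move=> B; rewrite inE => /eqP.
have h := @count_sup n s Ss [set x] hS; rewrite cards1 in h.
apply: leq_trans h.
apply: subset_leq_card; apply/subsetP=> B; rewrite !inE => /andP[/andP[-> _] xB].
by rewrite sub1set xB.
Qed.

Lemma gcount x : \sum_(B' in G) (x != c B' : nat) = #|G| - g x.
Proof.
rewrite -sum1_card /g.
have -> : \sum_(B' in G) 1 = \sum_(B' in G) ((c B' == x : nat) + (x != c B')).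
  by apply: eq_bigr => B' _; rewrite eq_sym; case: (x == c B').
by rewrite big_split /= addKn.
Qed.

Lemma goodpairs :
  #|G| * (#|G| - g x0) <= \sum_(B in G) \sum_(B' in G) (good B B' : nat)
                          + 2 * (#|G| * n ^ (s - 1)).
Proof.
rewrite -sum_nat_const.
apply: (@leq_trans (\sum_(B in G) \sum_(B' in G)
   ((good B B' : nat) + (c B \in B' : nat) + (c B' \in B : nat)))).
  apply: leq_sum => B BG; apply: (@leq_trans (#|G| - g (c B))).
    by rewrite leq_sub2l // g_max.
  rewrite -gcount; apply: leq_sum => B' _; rewrite /good.
  by case: (c B != c B'); case: (c B \in B'); case: (c B' \in B).
rewrite (eq_bigr (fun B => \sum_(B' in G) ((good B B' : nat) + (c B \in B' : nat))
      + \sum_(B' in G) (c B' \in B : nat))); last by move=> B _; rewrite big_split.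
rewrite big_split /=.
rewrite (eq_bigr (fun B => \sum_(B' in G) (good B B' : nat)
      + \sum_(B' in G) (c B \in B' : nat))); last by move=> B _; rewrite big_split.
rewrite big_split /= -addnA leq_add2l mul2n -addnn.
apply: leq_add.
  rewrite -sum_nat_const; apply: leq_sum => B _; exact: cnt_in.
rewrite exchange_big -sum_nat_const; apply: leq_sum => B' _; exact: cnt_in.
Qed.

Lemma WB_small B : B \in G -> #|WB B| <= n ^ (d - s).
Proof.
move=> BG; have hc := c_center BG.
apply: (@leq_trans #|[set A in F | c B |: B \subset A]|).
  apply: subset_leq_card; apply/subsetP=> A; rewrite /WB inE => /andP[AF wA].
  rewrite inE AF /=; apply/subsetP=> z; rewrite in_setU1; case/orP=> [/eqP ->|zB].
    exact: center_in hc AF wA.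
  by case/andP: wA => /subsetP h _; exact: h.
have cBs : #|B| = s by move: BG; rewrite !inE => /andP[/eqP].
apply: leq_trans (@count_sup n d.+1 F (c B |: B) Funif) _.
rewrite cardsU1 cBs; case/and3P: hc => -> _ _; apply: exp_mono_r; lia.
Qed.

Lemma nice_upper : #|nice| <= #|G| * n ^ (d - s).
Proof.
apply: (@leq_trans #|\bigcup_(B in G) WB B|).
  apply: subset_leq_card; apply/subsetP=> A An.
  have [AF bG wA _ _] := nice_props An.
  by apply/bigcupP; exists (bA A) => //; rewrite inE AF.
apply: (leq_trans (card_bigcup_le _ _)); rewrite -sum_nat_const.
by apply: leq_sum => B BG; apply: WB_small.
Qed.

Lemma F_upper : #|F| <= #|nice| + n ^ s * Q.
Proof.
apply: (@leq_trans #|nice :|: [set A in F | A \notin nice]|).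
  apply: subset_leq_card; apply/subsetP=> A AF; rewrite in_setU inE AF /=.
  by case: (A \in nice).
by apply: (leq_trans (leq_card_setU _ _).1); rewrite leq_add2l nonnice_bound.
Qed.

Lemma Fx0_bound :
  #|[set A in F | x0 \notin A]| <= n ^ s * Q + (#|G| - g x0) * n ^ (d - s).
Proof.
apply: (@leq_trans #|[set A in F | A \notin nice] :|:
                      \bigcup_(B in G | c B != x0) WB B|).
  apply: subset_leq_card; apply/subsetP=> A; rewrite inE => /andP[AF xA0].
  rewrite in_setU; case: (boolP (A \in nice)) => An; last by rewrite inE AF An.
  apply/orP; right; have [_ bG wA xAA _] := nice_props An.
  apply/bigcupP; exists (bA A); last by rewrite inE AF.
  rewrite bG /=; apply: contraNneq xA0 => <-; exact: xAA.
apply: (leq_trans (leq_card_setU _ _).1); apply: leq_add; first exact: nonnice_bound.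
apply: (leq_trans (card_bigcup_le _ _)); rewrite -gcount big_distrl /=.
rewrite big_mkcondr /=; apply: leq_sum => B BG.
case h: (c B != x0); last by [].
by rewrite [x0 == _]eq_sym h mul1n WB_small.
Qed.


Variable k : nat.
Hypothesis Hsize : 'C(n.-1, d) <= #|F| + k * n ^ d.-1.

Definition LL := d`! * 2 ^ d.
Definition EE0 := 2 * LL.
Definition c0 := 2 * (d.+1)^2 + EE0 * LL * 4 ^ d * (1 + 3 * (d.+1)^2) + 2 * EE0.

Lemma main_bound : #|[set A in F | x0 \notin A]| <= c0 * (k + 1) * n ^ d.-1.
Proof.
have hd : 0 < d by lia.
have hbin : 'C(n, d) <= 'C(n.-1, d) + n ^ d.-1.
  by apply: bin_pascal_le; lia.
have hL1 : n ^ (d - 2 * s) <= LL * Lbd.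
  have hb : n <= 2 * (n - (2 * s + 2) - (d - 2 * s)) by lia.
  apply: leq_trans (bin_lower hb) _.
  rewrite /LL /Lbd leq_mul2r; apply/orP; right; apply: leq_mul.
    by apply: leq_fact; lia.
  by apply: leq_pexp2l => //; lia.
have hL2 : n ^ d <= LL * 'C(n.-1, d).
  have hb : n <= 2 * (n.-1 - d) by lia.
  by apply: leq_trans (bin_lower hb) _; rewrite /LL.
have hLbd : Lbd <= n ^ (d - 2 * s).
  rewrite /Lbd; apply: leq_trans (bin_le_exp (n - (2 * s + 2)) (d - 2 * s)) _.
  by apply: exp_mono; lia.
have e1 : n ^ (d - 2 * s) * n ^ s = n ^ (d - s) by rewrite -expnD; congr (_ ^ _); lia.
have e2 : n ^ s * n ^ (s - 1) * n ^ (d - 2 * s) = n ^ d.-1.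
  by rewrite -!expnD; congr (_ ^ _); lia.
have e3 : n ^ s * n ^ (d - s) = n ^ d by rewrite -expnD; congr (_ ^ _); lia.
have hnn := nQ.
have hBad := Bad_bound. have hnice := nice_le.
have himg : #|image| <= 'C(n, d).
  have := subset_leq_card image_Ds; by rewrite /Ds card_draws card_ord.
have hU := card_U.
have hconf := conf_bound. have hT1 := T_upper. have hT2 := T_lower.
have hgp := goodpairs. have hx0 := Fx0_bound. have hnu := nice_upper.
have hFu := F_upper.
have hN : #|G| <= n ^ s.
  apply: leq_trans sizeSs; apply: subset_leq_card; apply/subsetP=> B.
  by rewrite inE => /andP[].
have hW : #|U| + Bad <= (k + 1 + 3 * (d.+1)^2) * n ^ d.-1.
  rewrite hnn in hFu hBad; rewrite !mulnDl mul1n -mulnA.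
  exact: (lin_W hU himg hnice hFu Hsize hbin hBad).
have hSG : (\sum_(B in G) \sum_(B' in G) (good B B' : nat)) * Lbd
     <= 4 ^ d * ((k + 1 + 3 * (d.+1)^2) * n ^ d.-1).
  apply: leq_trans hT2 _; apply: leq_trans hT1 _; rewrite leq_mul2l.
  by apply/orP; right; apply: leq_trans hconf hW.
have hFx : #|[set A in F | x0 \notin A]| <= #|F|.
  by apply: subset_leq_card; apply/subsetP=> A; rewrite inE => /andP[].
have LLp : 0 < LL by rewrite /LL muln_gt0 fact_gt0 expn_gt0.
have D2p : 0 < (d.+1)^2 by rewrite expn_gt0.
rewrite hnn in hx0 hFu.
rewrite /c0 /EE0.
exact: (final_arith LLp D2p hSG hL1 hgp hx0 hnu hFu hN e1 e2 e3 hL2 Hsize hFx).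
Qed.

End S.


Lemma star_card n d (x : 'I_n) : (#|star d.+1 x| <= 'C(n.-1, d))%N.
Proof.
have inj : {in star d.+1 x &, injective (fun A : {set 'I_n} => A :\ x)}.
  move=> A1 A2; rewrite /star !inE => /andP[_ h1] /andP[_ h2] e.
  by rewrite -(setD1K h1) -(setD1K h2) e.
rewrite -(card_in_imset inj).
have -> : 'C(n.-1, d) = #|[set D : {set 'I_n} | D \subset [set~ x] & #|D| == d]|.
  by rewrite cards_draws cardsC1 card_ord.
apply: subset_leq_card; apply/subsetP=> D /imsetP[A AS ->]; move: AS; rewrite /star !inE => /andP[/eqP cA xA].
apply/andP; split.
  by apply/subsetP=> z; rewrite !inE => /andP[].
by move: cA; rewrite (cardsD1 x) xA add1n => [[->]].
Qed.

Lemma small_card n (X : {set {set 'I_n}}) : (#|X| <= 2 ^ n)%N.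
Proof.
have -> : (2 ^ n = #|powerset [set: 'I_n]|)%N by rewrite card_powerset cardsT card_ord.
apply: subset_leq_card.
by apply/subsetP=> A _; rewrite inE subsetT.
Qed.

Lemma nat_part (d s n k : nat) (F : {set {set 'I_n}}) :
  (1 <= s)%N -> (2 * s <= d)%N -> (2 * (d + 1) <= n)%N ->
  uniform_family (d + 1) F -> s_witness s F ->
  ('C(n.-1, d) <= #|F| + k * n ^ d.-1)%N ->
  exists x0 : 'I_n,
    (#|symdiff F (star (d + 1) x0)| <= (2 * c0 d + 1 + 2 ^ (2 * d + 4)) * (k + 1) * n ^ d.-1)%N.
Proof.
move=> s1 sd hn Funif' Fwit Hsize.
have Funif : forall A, A \in F -> #|A| = d.+1 by move=> A /Funif'; rewrite addn1.
have n0 : (0 < n)%N by lia.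
pose xd := Ordinal n0.
have hm : (1 <= (k + 1) * n ^ d.-1)%N by rewrite muln_gt0 addn1 /= expn_gt0 n0.
case: (ltnP n (2 * d + 4)) => hn0.
  exists xd; apply: leq_trans (@small_card n _) _.
  rewrite -mulnA; apply: leq_trans (leq_pmulr _ hm); apply: leq_trans (leq_addl _ _).
  by apply: leq_pexp2l => //; lia.
have hb := main_bound xd s1 sd Funif Fwit hn0 Hsize.
set x := x0 _ _ _ _ in hb.
exists x; rewrite addn1.
set S := star d.+1 x.
have hFS : (#|F :\: S| <= #|[set A in F | x \notin A]|)%N.
  apply: subset_leq_card; apply/subsetP=> A; rewrite !inE => /andP[nS AF].
  rewrite AF /=; apply: contraNN nS => xA; by rewrite Funif // eqxx.
have hS := @star_card n d x.
have e1 := cardsID S F. have e2 := cardsID F S.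
rewrite setIC in e2.
apply: (leq_trans (leq_card_setU _ _).1).
have hS' : (#|S| <= 'C(n.-1, d))%N := hS.
have hSF : (#|S :\: F| <= #|F :\: S| + k * n ^ d.-1)%N.
  move: e1 e2 hS' Hsize; move: #|F :&: S| #|F :\: S| #|S :\: F| #|S| #|F|.
  move=> i a b cS cF; lia.
move: hb hFS hSF; set c := c0 d; set P := (2 ^ (2 * d + 4))%N.
set fx := #|[set A in F | x \notin A]|; set m := (n ^ d.-1)%N.
move=> hb hFS hSF; nia.
Qed.


Import Order.TTheory GRing.Theory Num.Theory.
Local Open Scope ring_scope.

Theorem proposition2p7 (R : realType) (d : nat) :
  exists C : R, forall (s n : nat) (K : R) (F : {set {set 'I_n}}),
    (1 <= s)%N -> (2 * s <= d)%N ->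
    (2 * (d + 1) <= n)%N -> 0 <= K ->
    uniform_family (d + 1) F -> s_witness s F ->
    ('C(n - 1, d))%:R - K * (n%:R ^+ (d - 1)) <= (#|F|)%:R ->
    exists x0 : 'I_n,
      (#|symdiff F (star (d + 1) x0)|)%:R <= C * (K + 1) * n%:R ^+ (d - 1).
Proof.
pose cn := (2 * c0 d + 1 + 2 ^ (2 * d + 4))%N.
exists (2 * cn)%:R => s n K F s1 sd hn K0 Funif Fwit hsize.
pose k := (Num.truncn K).+1.
have /andP[hk1 hk2] := truncn_itv K0.
have hKk : K <= k%:R by rewrite /k ltW.
have hkK : k%:R <= K + 1 by rewrite /k -addn1 natrD lerD2r.
have Hsize : ('C(n.-1, d) <= #|F| + k * n ^ d.-1)%N.
  rewrite -(ler_nat R) natrD natrM natrX.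
  rewrite !subn1 lerBlDr in hsize.
  apply: (le_trans hsize); rewrite lerD2l ler_wpM2r //.
  by rewrite exprn_ge0.
have [x hx] := @nat_part d s n k F s1 sd hn Funif Fwit Hsize.
exists x; rewrite -subn1 in hx.
apply: (le_trans (_ : _ <= (cn * (k + 1) * n ^ (d - 1))%:R)); first by rewrite ler_nat.
rewrite !natrM natrX natrD /=.
apply: ler_wpM2r; first by rewrite exprn_ge0 // ler0n.
have c0 : 0 <= (cn%:R : R) by rewrite ler0n.
move: (cn%:R : R) c0 => c c0; nra.
Qed.
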